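(* Let $(V,q)$ be a Minkowski space whose dimension is greater than $3$. Let $a,b,c$ be pairwise non-collinear vectors in $\mathcal{C}(0)$. Then there exists $d\in V\setminus\mathcal{C}(0)$ such that $q(d-a)=q(d-b)=q(d-c)=0$.
   Context: A Minkowski space is a pair $(V,q)$ where $V$ is a finite-dimensional real vector space of dimension $n>1$ and $q$ is a quadratic form on $V$ of signature $(1,n-1)$. $\mathcal{C}(0)=\{m\in V: q(m)=0\}$. *)

(* Defs.v *)
From mathcomp Require Import all_boot all_order all_algebra.
From mathcomp Require Import reals.
Set Implicit Arguments. Unset Strict Implicit. Unset Printing Implicit Defensive.
Import Order.TTheory GRing.Theory Num.Theory.
Local Open Scope ring_scope.

(* The finite-dimensional real vector space V of dimension n is modelled as
   row vectors 'rV[R]_n; a quadratic form on it is given by a symmetric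
   matrix A, via q_A(x) = x A x^T. *)
Definition qform (R : realType) (n : nat) (A : 'M[R]_n) (x : 'rV[R]_n) : R :=
  (x *m A *m x^T) 0 0.

Definition minkowski_diag (R : realType) (n : nat) : 'M[R]_n :=
  \matrix_(i, j) ((i == j)%:R * (if (i : nat) == 0%N then 1 else -1)).

Definition signature_1_nm1 (R : realType) (n : nat) (A : 'M[R]_n) : Prop :=
  A^T = A /\ exists P : 'M[R]_n, P \in unitmx /\ P *m A *m P^T = minkowski_diag R n.

Definition light_cone (R : realType) (n : nat) (A : 'M[R]_n) (m : 'rV[R]_n) : Prop :=
  qform A m = 0.

Definition collinear (R : realType) (n : nat) (u v : 'rV[R]_n) : Prop :=
  exists s t : R, (s != 0 \/ t != 0) /\ s *: u + t *: v = 0.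

(* Main.v *)
Require Import Defs.
From mathcomp Require Import all_boot all_order all_algebra.
From mathcomp Require Import reals ring lra.
Import GRing.Theory Num.Theory.
Local Open Scope ring_scope.
Set Implicit Arguments. Unset Strict Implicit.

Section S.
Variable R : realType.
Variable n : nat.

Definition bf (A : 'M[R]_n) (u v : 'rV[R]_n) : R := (u *m A *m v^T) 0 0.

Lemma bfDl A u v w : bf A (u + v) w = bf A u w + bf A v w.
Proof. by rewrite /bf !mulmxDl mxE. Qed.
Lemma bfZl A s u w : bf A (s *: u) w = s * bf A u w.
Proof. by rewrite /bf -!scalemxAl mxE. Qed.
Lemma bfNl A u w : bf A (- u) w = - bf A u w.
Proof. by rewrite -scaleN1r bfZl mulN1r. Qed.
Lemma bfC A u v : A^T = A -> bf A u v = bf A v u.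
Proof.
move=> hA; rewrite /bf; transitivity ((u *m A *m v^T)^T 0 0); first by rewrite [RHS]mxE.
by rewrite !trmx_mul trmxK hA mulmxA.
Qed.
Lemma bfDr A u v w : A^T = A -> bf A w (u + v) = bf A w u + bf A w v.
Proof. by move=> hA; rewrite !(bfC w) // bfDl. Qed.
Lemma bfZr A s u w : A^T = A -> bf A w (s *: u) = s * bf A w u.
Proof. by move=> hA; rewrite !(bfC w) // bfZl. Qed.
Lemma bfNr A u w : A^T = A -> bf A w (- u) = - bf A w u.
Proof. by move=> hA; rewrite !(bfC w) // bfNl. Qed.
Lemma qbf A u : qform A u = bf A u u.
Proof. by []. Qed.

Definition sg (j : 'I_n) : R := if (j : nat) == 0%N then 1 else -1.

Lemma qJ u : qform (minkowski_diag R n) u = \sum_j sg j * u 0 j ^+ 2.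
Proof.
rewrite /qform mxE; apply: eq_bigr => k _.
rewrite mxE (bigD1 k) //= big1 => [|j /negbTE hj]; last first.
  by rewrite mxE hj mul0r mulr0.
by rewrite mxE eqxx mul1r addr0 mxE /sg expr2; case: ifP => _; ring.
Qed.

Lemma qJ0 (i0 : 'I_n) (w : 'rV[R]_n) : (i0 : nat) = 0%N ->
  qform (minkowski_diag R n) w = 0 -> w 0 i0 = 0 -> w = 0.
Proof.
move=> h0 hq hw.
have e : \sum_j w 0 j ^+ 2 = 0.
  have e1 : \sum_j - w 0 j ^+ 2 = qform (minkowski_diag R n) w.
    rewrite qJ; apply: eq_bigr => j _.
  rewrite /sg; case: ifP => [/eqP hj|_]; last by rewrite mulN1r.
  have -> : j = i0 by apply: val_inj; rewrite /= hj h0.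
  by rewrite hw expr0n /= mulr0 oppr0.
  by apply/eqP; rewrite -oppr_eq0 -sumrN e1 hq.
apply/rowP => j; rewrite mxE; apply/eqP; rewrite -sqrf_eq0; apply/eqP.
exact: (psumr_eq0P (fun k _ => sqr_ge0 (w 0 k)) e).
Qed.

Lemma J_sym : (minkowski_diag R n)^T = minkowski_diag R n.
Proof.
apply/matrixP => i j; rewrite !mxE.
case: (boolP (i == j)) => [/eqP -> | h]; first by rewrite eqxx.
have h' : (j == i) = false by rewrite eq_sym; exact: negbTE h.
by rewrite h' !mul0r.
Qed.

Lemma nullJ (i0 : 'I_n) u v : (i0 : nat) = 0%N ->
  qform (minkowski_diag R n) u = 0 -> qform (minkowski_diag R n) v = 0 ->
  bf (minkowski_diag R n) u v = 0 -> collinear u v.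
Proof.
move=> h0 hu hv huv.
set J := minkowski_diag R n in hu hv huv *.
have hJ : J^T = J := J_sym.
set w := v 0 i0 *: u - u 0 i0 *: v.
have hw : qform J w = 0.
  rewrite qbf /w bfDl bfNl !bfZl !bfDr // !bfNr // !bfZr //.
  rewrite -!qbf hu hv (bfC v u) // huv; ring.
have hw0 : w 0 i0 = 0 by rewrite /w !mxE mulrC subrr.
have w0 := qJ0 h0 hw hw0.
case: (eqVneq (u 0 i0) 0) => hu0; last first.
  by exists (v 0 i0), (- u 0 i0); split; [right; rewrite oppr_eq0|rewrite scaleNr].
case: (eqVneq (v 0 i0) 0) => hv0.
  exists 1, 0; split; first by left; rewrite oner_eq0.
  by rewrite (qJ0 h0 hu hu0) scaler0 scale0r addr0.
by exists (v 0 i0), (- u 0 i0); split; [left|rewrite scaleNr].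
Qed.

Lemma bf_change A P u v : bf A (u *m P) (v *m P) = bf (P *m A *m P^T) u v.
Proof. by rewrite /bf trmx_mul !mulmxA. Qed.

Lemma null_coll (A : 'M[R]_n) (i0 : 'I_n) u v : (i0 : nat) = 0%N ->
  signature_1_nm1 A -> qform A u = 0 -> qform A v = 0 -> bf A u v = 0 ->
  collinear u v.
Proof.
move=> h0 [hA [P [hP hPA]]] hu hv huv.
have eu : u = (u *m invmx P) *m P by rewrite mulmxKV.
have ev : v = (v *m invmx P) *m P by rewrite mulmxKV.
have [s [t [hst e]]] : collinear (u *m invmx P) (v *m invmx P).
  apply: (nullJ h0).
  - by rewrite qbf -hPA -bf_change -eu -qbf.
  - by rewrite qbf -hPA -bf_change -ev -qbf.
  - by rewrite -hPA -bf_change -eu -ev.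
exists s, t; split => //.
transitivity ((s *: (u *m invmx P) + t *: (v *m invmx P)) *m P); last by rewrite e mul0mx.
by rewrite mulmxDl -!scalemxAl -!eu -!ev.
Qed.
End S.
Unset Implicit Arguments.
Lemma q_sub (R : realType) n (A : 'M[R]_n) d v : A^T = A ->
  qform A v = 0 -> 2 * bf A d v = qform A d -> qform A (d - v) = 0.
Proof.
move=> hA hv h.
rewrite qbf bfDl bfNl !bfDr // !bfNr // -!qbf hv (bfC v d) // -h; ring.
Qed.

Theorem lemma2p4 (R : realType) (n : nat) (A : 'M[R]_n)
  (hn : (3 < n)%N) (hsig : signature_1_nm1 A)
  (a b c : 'rV[R]_n)
  (ha : light_cone A a) (hb : light_cone A b) (hc : light_cone A c)
  (hab : ~ collinear a b) (hbc : ~ collinear b c) (hac : ~ collinear a c) :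
  exists d : 'rV[R]_n, ~ light_cone A d /\
    qform A (d - a) = 0 /\ qform A (d - b) = 0 /\ qform A (d - c) = 0.
Proof.
have hA : A^T = A by case: hsig.
have n0 : (0 < n)%N by apply: leq_trans hn.
pose i0 : 'I_n := Ordinal n0.
have hi0 : (i0 : nat) = 0%N by [].
rewrite /light_cone in ha hb hc.
have nz : forall u v, qform A u = 0 -> qform A v = 0 -> ~ collinear u v ->
    bf A u v != 0.
  move=> u v hu hv hc'; apply/eqP => h; apply: hc'.
  exact: (null_coll hi0 hsig hu hv h).
have hx := nz _ _ hb hc hbc.
have hy := nz _ _ ha hc hac.
have hz := nz _ _ ha hb hab.
set x := bf A b c in hx *.
set y := bf A a c in hy *.
set z := bf A a b in hz *.
pose N := A *m (col_mx a (col_mx b c))^T.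
have hK : kermx N != 0.
  rewrite -mxrank_eq0 mxrank_ker subn_eq0 -ltnNge.
  exact: leq_ltn_trans (rank_leq_col N) hn.
have [i hi] : exists i, row i (kermx N) != 0.
  case: (pickP (fun i => row i (kermx N) != 0)) => [i hi|h]; first by exists i.
  move/eqP: hK => []; apply/row_matrixP => i; rewrite row0.
  by move/negbT: (h i); rewrite negbK => /eqP.
set w := row i (kermx N) in hi.
have hwN : w *m N = 0 by apply/sub_kermxP; exact: row_sub.
move: hwN; rewrite /N mulmxA !tr_col_mx !mul_mx_row => /eqP.
rewrite !row_mx_eq0 => /and3P [/eqP h1 /eqP h2 /eqP h3].
have wa : bf A w a = 0 by rewrite /bf h1 mxE.
have wb : bf A w b = 0 by rewrite /bf h2 mxE.
have wc : bf A w c = 0 by rewrite /bf h3 mxE.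
have hm : qform A w != 0.
  apply/eqP => hw.
  have [s [t [hst e]]] := null_coll hi0 hsig hw ha (wa).
  have : bf A (s *: w + t *: a) b = 0 by rewrite e /bf !mul0mx mxE.
  rewrite bfDl !bfZl wb -/z mulr0 add0r => /eqP; rewrite mulf_eq0 (negbTE hz) orbF.
  move=> /eqP ht; move: e hst; rewrite ht scale0r addr0 => /eqP.
  by rewrite scaler_eq0 (negbTE hi) orbF => /eqP -> []; rewrite eqxx.
have ba : bf A b a = z by rewrite /z bfC.
have ca : bf A c a = y by rewrite /y bfC.
have cb : bf A c b = x by rewrite /x bfC.
have qa : bf A a a = 0 by [].
have qb : bf A b b = 0 by [].
have qc : bf A c c = 0 by [].
pose D := 2 * x * y * z.
pose al := x * (y + z - x) / D.
pose be := y * (x - y + z) / D.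
pose ga := z * (x + y - z) / D.
have [e ee] : exists e, e = al *: a + be *: b + ga *: c by eexists.
have ea : bf A e a = 1.
  rewrite ee !bfDl !bfZl qa ba ca /al /be /ga /D; field.
  by rewrite hx hy hz.
have eb : bf A e b = 1.
  rewrite ee !bfDl !bfZl qb -/z cb /al /be /ga /D; field.
  by rewrite hx hy hz.
have ec : bf A e c = 1.
  rewrite ee !bfDl !bfZl qc -/x -/y /al /be /ga /D; field.
  by rewrite hx hy hz.
have we : bf A w e = 0.
  by rewrite ee !bfDr // !bfZr // wa wb wc !mulr0 !addr0.
have qe : bf A e e = al + be + ga.
  by rewrite {2}ee !bfDr // !bfZr // ea eb ec !mulr1.
pose S := al + be + ga.
pose t : R := if S == 0 then 1 else 0.
pose f := e + t *: w.
have fa : bf A f a = 1 by rewrite bfDl bfZl wa mulr0 addr0.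
have fb : bf A f b = 1 by rewrite bfDl bfZl wb mulr0 addr0.
have fc : bf A f c = 1 by rewrite bfDl bfZl wc mulr0 addr0.
have qf : bf A f f = S + t ^+ 2 * qform A w.
  rewrite /f !bfDl !bfDr // !bfZl !bfZr // qe (bfC e w) // we -qbf /S; ring.
have hQ : bf A f f != 0.
  rewrite qf /t; case: ifP => [/eqP ->|/negbT hS].
    by rewrite add0r expr1n mul1r.
  by rewrite expr0n /= mul0r addr0.
pose d := (2 / bf A f f) *: f.
have dd : qform A d = 4 / bf A f f.
  rewrite qbf /d bfZl bfZr //; field; exact: hQ.
have key : forall v, bf A f v = 1 -> qform A v = 0 -> qform A (d - v) = 0.
  move=> v fv qv; apply: q_sub => //.
  rewrite /d bfZl fv dd; field; exact: hQ.
exists d; split; last by split; [|split]; apply: key.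
by rewrite /light_cone dd; apply/eqP; rewrite mulf_eq0 invr_eq0 negb_or hQ andbT pnatr_eq0.
Qed.
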